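(* There are absolute constants $c>0$ and $n_0$ such that for every $n\ge n_0$ and every integer $G$ with $1\le G\le 2^{n/4}$, there exists a Boolean function $f:\{0,1\}^n\to\{0,1\}$ that is computed by some formula on $n$ input variables with at most $G$ gates, but every formula computing $f$ has formula size at least $c\,nG/\log n$.
   Context: A formula on input variables $x_1,\dots,x_n$ is a rooted tree whose leaves are labeled by input variables (the same variable may label many leaves) and whose internal vertices are \textsc{not} gates (fanin 1) or unbounded-fanin \textsc{and}/\textsc{or} gates. The formula size is the number of leaves (inputs counted with multiplicity); the gate count is the number of \textsc{and} and \textsc{or} gates. *)

(* Defs.v *)
From mathcomp Require Import all_boot.
From Stdlib Require Import Reals.

Set Implicit Arguments.
Unset Strict Implicit.
Unset Printing Implicit Defensive.

(* AND/OR gates take a first child plus a list of further children, so that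
   every gate has fanin >= 1 (all leaves are variables). *)
Inductive formula (n : nat) : Type :=
| FVar : 'I_n -> formula n
| FNot : formula n -> formula n
| FAnd : formula n -> list (formula n) -> formula n
| FOr  : formula n -> list (formula n) -> formula n.

Arguments FVar {n}.
Arguments FNot {n}.
Arguments FAnd {n}.
Arguments FOr {n}.

Fixpoint feval (n : nat) (x : 'I_n -> bool) (F : formula n) : bool :=
  match F with
  | FVar i => x i
  | FNot G => ~~ feval x G
  | FAnd G Gs =>
      feval x G &&
      (fix ev (l : list (formula n)) : bool :=
         match l with nil => true | H :: t => feval x H && ev t end) Gs
  | FOr G Gs =>
      feval x G ||
      (fix ev (l : list (formula n)) : bool :=
         match l with nil => false | H :: t => feval x H || ev t end) Gs
  end.

Fixpoint fsize (n : nat) (F : formula n) : nat :=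
  match F with
  | FVar _ => 1
  | FNot G => fsize G
  | FAnd G Gs | FOr G Gs =>
      fsize G +
      (fix sz (l : list (formula n)) : nat :=
         match l with nil => 0 | H :: t => fsize H + sz t end) Gs
  end.

Fixpoint fgates (n : nat) (F : formula n) : nat :=
  match F with
  | FVar _ => 0
  | FNot G => fgates G
  | FAnd G Gs | FOr G Gs =>
      1 + fgates G +
      (fix gt (l : list (formula n)) : nat :=
         match l with nil => 0 | H :: t => fgates H + gt t end) Gs
  end.

Definition computes (n : nat) (F : formula n) (f : ('I_n -> bool) -> bool) : Prop :=
  forall x : 'I_n -> bool, feval x F = f x.

(* Main.v *)
Require Import Defs.
From mathcomp Require Import all_boot.
From Stdlib Require Import Reals Lra ClassicalEpsilon Classical.
From Stdlib Require ZArith.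
From mathcomp Require Import zify.
Local Notation "m ^ n" := (expn m n) : nat_scope.

Set Implicit Arguments.
Unset Strict Implicit.
Unset Printing Implicit Defensive.

Fixpoint lall (T : Type) (P : T -> Prop) (l : list T) : Prop :=
  match l with nil => True | x :: t => P x /\ lall P t end.

Definition formula_ind' (n : nat) (P : formula n -> Prop)
  (hv : forall i, P (FVar i)) (hn : forall G, P G -> P (FNot G))
  (ha : forall G Gs, P G -> lall P Gs -> P (FAnd G Gs))
  (ho : forall G Gs, P G -> lall P Gs -> P (FOr G Gs)) : forall F, P F :=
  fix rec F := match F return P F with
  | FVar i => hv i
  | FNot G => hn G (rec G)
  | FAnd G Gs => ha G Gs (rec G)
      ((fix go l : lall P l := match l return lall P l with
          nil => I | H :: t => conj (rec H) (go t) end) Gs)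
  | FOr G Gs => ho G Gs (rec G)
      ((fix go l : lall P l := match l return lall P l with
          nil => I | H :: t => conj (rec H) (go t) end) Gs)
  end.

Section Basic.
Variable n : nat.

Lemma feval_and (x : 'I_n -> bool) G Gs :
  feval x (FAnd G Gs) = feval x G && all (feval x) Gs.
Proof. rewrite /=; congr andb; by elim: Gs => //= H t ->. Qed.

Lemma feval_or (x : 'I_n -> bool) G Gs :
  feval x (FOr G Gs) = feval x G || has (feval x) Gs.
Proof. rewrite /=; congr orb; by elim: Gs => //= H t ->. Qed.

Lemma fsize_and (G : formula n) Gs :
  fsize (FAnd G Gs) = fsize G + sumn (map (@fsize n) Gs).
Proof. rewrite /=; congr addn; by elim: Gs => //= H t ->. Qed.

Lemma fsize_or (G : formula n) Gs :
  fsize (FOr G Gs) = fsize G + sumn (map (@fsize n) Gs).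
Proof. rewrite /=; congr addn; by elim: Gs => //= H t ->. Qed.

Lemma fgates_and (G : formula n) Gs :
  fgates (FAnd G Gs) = 1 + fgates G + sumn (map (@fgates n) Gs).
Proof. rewrite /=; congr addn; by elim: Gs => //= H t ->. Qed.

Lemma fgates_or (G : formula n) Gs :
  fgates (FOr G Gs) = 1 + fgates G + sumn (map (@fgates n) Gs).
Proof. rewrite /=; congr addn; by elim: Gs => //= H t ->. Qed.

Inductive dm : Type := Lit of bool & 'I_n | Bin of bool & dm & dm.

Fixpoint deval (x : 'I_n -> bool) (t : dm) : bool :=
  match t with
  | Lit b i => x i (+) b
  | Bin o l r => if o then deval x l && deval x r else deval x l || deval x r
  end.

Fixpoint dsize (t : dm) : nat :=
  match t with Lit _ _ => 1 | Bin _ l r => dsize l + dsize r end.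

Fixpoint norm (F : formula n) (p : bool) : dm :=
  match F with
  | FVar i => Lit p i
  | FNot G => norm G (~~ p)
  | FAnd G Gs => foldl (fun a H => Bin (~~ p) a (norm H p)) (norm G p) Gs
  | FOr G Gs => foldl (fun a H => Bin p a (norm H p)) (norm G p) Gs
  end.

Lemma foldl_eval x o (f : formula n -> dm) acc l :
  deval x (foldl (fun a H => Bin o a (f H)) acc l) =
  if o then deval x acc && all (fun H => deval x (f H)) l
  else deval x acc || has (fun H => deval x (f H)) l.
Proof.
elim: l acc => [|H t IH] acc /=; first by case: o; rewrite ?andbT ?orbF.
rewrite IH /=; clear IH; case: o; by rewrite ?andbA ?orbA.
Qed.

Lemma foldl_size o (f : formula n -> dm) acc l :
  dsize (foldl (fun a H => Bin o a (f H)) acc l) =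
  dsize acc + sumn (map (fun H => dsize (f H)) l).
Proof.
elim: l acc => [|H t IH] acc /=; first by rewrite addn0.
by rewrite IH /= addnA.
Qed.

Lemma norm_eval x F : forall p, deval x (norm F p) = feval x F (+) p.
Proof.
elim/formula_ind': F => [i|G IH|G Gs IH IHs|G Gs IH IHs] p.
- by [].
- by rewrite /= IH; case: p; case: (feval x G).
- rewrite feval_and /= foldl_eval IH.
  have E : forall q, all (fun H => deval x (norm H q)) Gs = all (fun H => feval x H (+) q) Gs.
    move=> q; elim: Gs IHs {IH} => //= H t IHt [h1 h2]; by rewrite h1 IHt.
  have E2 : forall q, has (fun H => deval x (norm H q)) Gs = has (fun H => feval x H (+) q) Gs.
    move=> q; elim: Gs IHs {IH E} => //= H t IHt [h1 h2]; by rewrite h1 IHt.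
  case: p; rewrite /= ?E ?E2 ?addbT ?addbF.
  + rewrite negb_and; congr orb; rewrite -has_predC; apply: eq_has => H /=; by rewrite addbT.
  + congr andb; apply: eq_all => H; by rewrite addbF.
- rewrite feval_or /= foldl_eval IH.
  have E : forall q, all (fun H => deval x (norm H q)) Gs = all (fun H => feval x H (+) q) Gs.
    move=> q; elim: Gs IHs {IH} => //= H t IHt [h1 h2]; by rewrite h1 IHt.
  have E2 : forall q, has (fun H => deval x (norm H q)) Gs = has (fun H => feval x H (+) q) Gs.
    move=> q; elim: Gs IHs {IH E} => //= H t IHt [h1 h2]; by rewrite h1 IHt.
  case: p; rewrite /= ?E ?E2 ?addbT ?addbF.
  + rewrite negb_or; congr andb; rewrite -all_predC; apply: eq_all => H /=; by rewrite addbT.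
  + congr orb; apply: eq_has => H; by rewrite addbF.
Qed.

Lemma norm_size F : forall p, dsize (norm F p) = fsize F.
Proof.
elim/formula_ind': F => [i|G IH|G Gs IH IHs|G Gs IH IHs] p.
- by [].
- by rewrite /= IH.
- rewrite fsize_and /= foldl_size IH; congr addn.
  elim: Gs IHs {IH} => //= H t IHt [h1 h2]; by rewrite h1 IHt.
- rewrite fsize_or /= foldl_size IH; congr addn.
  elim: Gs IHs {IH} => //= H t IHt [h1 h2]; by rewrite h1 IHt.
Qed.

Definition Sym := ((bool * 'I_n) + bool)%type.

Fixpoint encode (t : dm) : seq Sym :=
  match t with
  | Lit b i => [:: inl (b, i)]
  | Bin o l r => inr o :: encode l ++ encode r
  end.

Fixpoint decode (f : nat) (s : seq Sym) : option (dm * seq Sym) :=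
  match f with
  | 0 => None
  | f'.+1 =>
    match s with
    | nil => None
    | inl (b, i) :: r => Some (Lit b i, r)
    | inr o :: r =>
      match decode f' r with
      | None => None
      | Some (l, r1) =>
        match decode f' r1 with
        | None => None
        | Some (rr, r2) => Some (Bin o l rr, r2)
        end
      end
    end
  end.

Lemma encode_size t : (size (encode t)).+1 = 2 * dsize t.
Proof.
elim: t => [b i|o l IHl r IHr] //=.
rewrite size_cat; lia.
Qed.

Lemma decode_encode t : forall f rest, size (encode t) <= f ->
  decode f (encode t ++ rest) = Some (t, rest).
Proof.
elim: t => [b i|o l IHl r IHr] [|f] rest //=.
rewrite size_cat ltnS => Hs.
rewrite -catA IHl; last by apply: leq_trans Hs; apply: leq_addr.
rewrite IHr //; apply: leq_trans Hs; apply: leq_addl.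
Qed.

End Basic.
Section Count.
Variable n : nat.

Definition Phi (L : nat) (w : L.-tuple (Sym n)) : ('I_n -> bool) -> bool :=
  fun x => match decode L w with Some (t, _) => deval x t | None => false end.

Lemma small_in_image L (F : formula n) : 2 * fsize F <= L ->
  exists w : L.-tuple (Sym n), forall x, Phi w x = feval x F.
Proof.
move=> HL.
set t := norm F false.
have Hs : size (encode t) < L.
  have := encode_size t; rewrite /t norm_size; lia.
set s := encode t ++ nseq (L - size (encode t)) (inr true : Sym n).
have Hsz : size s == L by rewrite size_cat size_nseq subnKC // ltnW.
exists (Tuple Hsz) => x.
rewrite /Phi.
have -> : tval (Tuple Hsz) = s by [].
rewrite /s decode_encode; first by rewrite norm_eval addbF.
exact: ltnW.
Qed.

Lemma pigeon (I T : finType) (fam : I -> ('I_n -> bool) -> bool)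
  (phi : T -> ('I_n -> bool) -> bool) :
  (forall i j, (forall x, fam i x = fam j x) -> i = j) -> #|T| < #|I| ->
  exists i, forall t, ~ (forall x, phi t x = fam i x).
Proof.
move=> Hinj Hcard.
apply: NNPP => Hne.
have H : forall i, exists t, forall x, phi t x = fam i x.
  move=> i; apply: NNPP => Hn; apply: Hne; exists i => t Ht; apply: Hn; by exists t.
pose g i := proj1_sig (constructive_indefinite_description _ (H i)).
have Hg : forall i x, phi (g i) x = fam i x.
  move=> i; exact: (proj2_sig (constructive_indefinite_description _ (H i))).
have ginj : injective g.
  move=> i j Eij; apply: Hinj => x; by rewrite -!Hg Eij.
have := @leq_card _ _ g ginj; rewrite leqNgt Hcard //.
Qed.

End Count.
Lemma bits_inj k : forall i j, i < 2 ^ k -> j < 2 ^ k ->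
  (forall b, b < k -> odd (i %/ 2 ^ b) = odd (j %/ 2 ^ b)) -> i = j.
Proof.
elim: k => [|k IH] i j.
  by rewrite expn0 !ltnS !leqn0 => /eqP -> /eqP ->.
move=> Hi Hj Hb.
have H0 := Hb 0 isT; rewrite expn0 !divn1 in H0.
have Hh : i./2 = j./2.
  apply: IH.
  - by rewrite -divn2 ltn_divLR // -expnSr.
  - by rewrite -divn2 ltn_divLR // -expnSr.
  move=> b Hbk; have := Hb b.+1 Hbk.
  by rewrite expnS -!divn2 !divnMA.
by rewrite -(odd_double_half i) -(odd_double_half j) H0 Hh.
Qed.

Section Family.
Variables n' k m g : nat.
Hypothesis Hkm : k.+1 + m = n'.+1.
Hypothesis Hg : g.+1 <= 2 ^ k.

Notation N := n'.+1.

Definition z : 'I_N := inord 0.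
Definition avar (b : 'I_k) : 'I_N := inord b.+1.
Definition yvar (j : 'I_m) : 'I_N := inord (k.+1 + j).

Lemma val_z : nat_of_ord z = 0. Proof. by rewrite /z inordK. Qed.
Lemma val_avar b : nat_of_ord (avar b) = b.+1.
Proof. rewrite /avar inordK //; have := ltn_ord b; lia. Qed.
Lemma val_yvar j : nat_of_ord (yvar j) = k.+1 + j.
Proof. rewrite /yvar inordK //; have := ltn_ord j; lia. Qed.

Definition Idx := {ffun 'I_g.+1 -> {ffun 'I_m -> bool}}.

Definition lit (i : nat) (b : 'I_k) : formula N :=
  if odd (i %/ 2 ^ b) then FVar (avar b) else FNot (FVar (avar b)).

Definition term (S : Idx) (i : 'I_g.+1) : formula N :=
  FAnd (FVar z) (map (lit i) (enum 'I_k) ++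
                 map (fun j => FVar (yvar j)) (filter (fun j => S i j) (enum 'I_m))).

Definition top (S : Idx) : formula N :=
  match g as g0 return (('I_g0.+1 -> formula N) -> formula N) with
  | 0 => fun tm => tm ord0
  | g1.+1 => fun tm => FOr (tm ord0) (map (fun i => tm (lift ord0 i)) (enum 'I_g1.+1))
  end (term S).

Definition termv (S : Idx) (i : 'I_g.+1) (x : 'I_N -> bool) : bool :=
  x z && [forall b : 'I_k, x (avar b) == odd (i %/ 2 ^ b)]
      && [forall j : 'I_m, S i j ==> x (yvar j)].

Lemma term_eval S i x : feval x (term S i) = termv S i x.
Proof.
rewrite /term feval_and all_cat /termv -andbA /=; congr andb; congr andb.
- rewrite all_map; apply/allP/forallP => H b.
  + have := H b (mem_enum _ b); rewrite /lit /=; case: odd => /=.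
    * by rewrite eqb_id.
    * by rewrite eqbF_neg.
  + move=> _; have := H b; rewrite /lit /=; case: odd => /=.
    * by rewrite eqb_id.
    * by rewrite eqbF_neg.
- rewrite all_map; apply/allP/forallP => H j.
  + apply/implyP => Hs; apply: (H j); by rewrite mem_filter Hs mem_enum.
  + rewrite mem_filter => /andP [Hs _]; have := H j; by rewrite Hs.
Qed.

Lemma top_eval S x : feval x (top S) = [exists i, termv S i x].
Proof.
rewrite /top.
move: (term S) (termv S) (term_eval S).
case: g => [|g1] tm tv Htm.
- rewrite Htm; apply/idP/existsP => [H|[i]]; first by exists ord0.
  by rewrite (ord1 i).
- rewrite feval_or Htm has_map; apply/idP/existsP.
  + case/orP => [H|/hasP [i _ H]]; first by exists ord0.
    exists (lift ord0 i); by rewrite /= Htm in H.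
  + case=> i; case: (unliftP ord0 i) => [j ->|->] H; last by rewrite H.
    apply/orP; right; apply/hasP; exists j; by rewrite ?mem_enum //= Htm.
Qed.

Lemma sumn_gates0 (l : seq (formula N)) :
  all (fun F => fgates F == 0) l -> sumn (map (@fgates N) l) = 0.
Proof. elim: l => //= F l IH /andP [/eqP -> H]; by rewrite IH. Qed.

Lemma term_gates S i : fgates (term S i) = 1.
Proof.
rewrite /term fgates_and /= sumn_gates0 // all_cat !all_map; apply/andP; split.
- by apply/allP => b _ /=; rewrite /lit; case: odd.
- by apply/allP => j _.
Qed.

Lemma top_gates S : fgates (top S) = if g is 0 then 1 else g.+2.
Proof.
rewrite /top; move: (term S) (term_gates S); case: g => [|g1] tm Htm.
- by rewrite Htm.
- rewrite fgates_or Htm -map_comp.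
  have -> : sumn (map (@fgates N \o (fun i => tm (lift ord0 i))) (enum 'I_g1.+1)) = g1.+1.
    rewrite (eq_map (g := fun _ => 1)); last by move=> i /=; rewrite Htm.
    rewrite -[in RHS](size_enum_ord g1.+1); elim: (enum _) => //= a l ->; by [].
  by [].
Qed.

Definition fam (S : Idx) : ('I_N -> bool) -> bool := fun x => feval x (top S).

Lemma fam_inj S T : (forall x, fam S x = fam T x) -> S = T.
Proof.
move=> H; apply/ffunP => i; apply/ffunP => j.
pose x (v : 'I_N) := if nat_of_ord v == 0 then true else
  if nat_of_ord v <= k then odd (i %/ 2 ^ (nat_of_ord v).-1) else (nat_of_ord v - k.+1 != nat_of_ord j).
have Hx : forall U : Idx, fam U x = ~~ U i j.
  move=> U; rewrite /fam top_eval.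
  have E : forall i', termv U i' x = (i' == i) && ~~ U i j.
    move=> i'; rewrite /termv.
    have -> : x z = true by rewrite /x val_z.
    have -> : [forall b : 'I_k, x (avar b) == odd (i' %/ 2 ^ b)] = (i' == i).
      apply/forallP/eqP => [Hb|->] .
      + apply: val_inj; apply: (@bits_inj k).
        * exact: leq_trans (ltn_ord i') Hg.
        * exact: leq_trans (ltn_ord i) Hg.
        * move=> b Hbk; have := Hb (Ordinal Hbk); rewrite /x val_avar /=.
          rewrite ifT // => /eqP ->; by [].
      + move=> b; rewrite /x val_avar /= ifT ?ltn_ord //.
    case: eqP => [->|] //=.
    apply/forallP/idP => [Hj|Hn j'].
    + have := Hj j; rewrite /x val_yvar /=.
      have -> : (k.+1 + j <= k) = false by lia.
      rewrite addKn eqxx implybF; by [].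
    + rewrite /x val_yvar /=.
      have -> : (k.+1 + j' <= k) = false by lia.
      rewrite addKn; apply/implyP => Hs; apply/eqP => Ej.
      have Ej' : j' = j by apply: val_inj.
      by move: Hn; rewrite -Ej' Hs.
  apply/existsP/idP => [[i' Hi']|Hn]; first by move: Hi'; rewrite E => /andP [].
  by exists i; rewrite E eqxx.
have := H x; rewrite !Hx; by case: (S i j); case: (T i j).
Qed.

Lemma card_Idx : #|{: Idx}| = 2 ^ (m * g.+1).
Proof. by rewrite card_ffun card_ffun card_bool !card_ord expnM. Qed.

End Family.
Lemma INR_expn a b : INR (a ^ b) = (INR a ^ b)%R.
Proof.
elim: b => [|b IH]; first by rewrite expn0.
by rewrite expnS -multE mult_INR IH.
Qed.

Lemma INR_muln a b : INR (a * b) = (INR a * INR b)%R.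
Proof. by rewrite -multE mult_INR. Qed.

Lemma INR_addn a b : INR (a + b) = (INR a + INR b)%R.
Proof. by rewrite -plusE plus_INR. Qed.

Lemma INR2 : INR 2 = 2%R.
Proof. simpl; lra. Qed.

Lemma ln2_gt : (/2 < ln 2)%R.
Proof. exact: ln_lt_2. Qed.

Lemma ln_le (x y : R) : (0 < x)%R -> (x <= y)%R -> (ln x <= ln y)%R.
Proof.
move=> Hx Hxy; case: (Rle_lt_or_eq_dec _ _ Hxy) => H.
- by apply: Rlt_le; apply: ln_increasing.
- by rewrite H; apply: Rle_refl.
Qed.

Lemma k_bound (n G k : nat) : (2 ^ k <= 2 * G)%N -> (1 <= G)%N ->
  (INR G <= Rpower 2 (INR n / 4))%R -> (INR k <= 1 + INR n / 4)%R.
Proof.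
move=> Hk HG HR.
have HG' : (1 <= INR G)%R by apply: (le_INR 1); apply/leP.
have H1 : (2 ^ k <= 2 * INR G)%R.
  have := le_INR _ _ (elimT leP Hk); by rewrite INR_expn INR_muln INR2.
have Hl : (ln (2 ^ k) <= ln (2 * INR G))%R.
  apply: ln_le => //; apply: pow_lt; lra.
rewrite ln_pow in Hl; last lra.
rewrite ln_mult in Hl; try lra.
have Hl2 : (ln (INR G) <= ln (Rpower 2 (INR n / 4)))%R by apply: ln_le; lra.
rewrite ln_Rpower in Hl2.
have := ln2_gt => h2.
have : (INR k * ln 2 <= (1 + INR n / 4) * ln 2)%R by lra.
move=> H; apply: (Rmult_le_reg_r (ln 2)); lra.
Qed.

Lemma real_key (n G m Gp s0 : nat) : (8 <= n)%N -> (1 <= G)%N ->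
  (INR n / 2 <= INR m)%R -> (INR G <= 2 * INR Gp)%R ->
  (INR s0 <= 1 / 100 * INR n * INR G / ln (INR n))%R ->
  ((2 * n + 2) ^ (2 * s0) < 2 ^ (m * Gp))%N.
Proof.
move=> Hn HG Hm HGp Hs.
have n8 : (8 <= INR n)%R by have := le_INR _ _ (elimT leP Hn); rewrite /=; lra.
have G1 : (1 <= INR G)%R by apply: (le_INR 1); apply/leP.
have lnpos : (0 < ln (INR n))%R by rewrite -ln_1; apply: ln_increasing; lra.
have s0pos : (0 <= INR s0)%R by apply: pos_INR.
have HA : (INR s0 * ln (INR n) <= 1 / 100 * INR n * INR G)%R.
  have := Rmult_le_compat_r _ _ _ (Rlt_le _ _ lnpos) Hs.
  by rewrite /Rdiv Rmult_assoc Rinv_l ?Rmult_1_r //; lra.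
have Hln : (ln (INR (2 * n + 2)) <= 2 * ln (INR n))%R.
  rewrite INR_addn INR_muln INR2.
  have -> : (2 * ln (INR n) = ln (INR n * INR n))%R by rewrite ln_mult; lra.
  apply: ln_le; nra.
have h2 := ln2_gt.
have Hmg : (INR n * INR G / 4 <= INR m * INR Gp)%R.
  have : (0 <= INR Gp)%R by apply: pos_INR.
  nra.
have Hlt : (INR (2 * s0) * ln (INR (2 * n + 2)) < INR (m * Gp) * ln 2)%R.
  rewrite INR_muln INR_muln INR2.
  have a1 : (2 * INR s0 * ln (INR (2 * n + 2)) <= 4 * (INR s0 * ln (INR n)))%R by nra.
  have a2 : (INR n * INR G / 4 * ln 2 <= INR m * INR Gp * ln 2)%R.
    apply: Rmult_le_compat_r; lra.
  have a4 : (0 < INR n * INR G * (ln 2 - / 2))%R.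
    apply: Rmult_lt_0_compat; last lra.
    apply: Rmult_lt_0_compat; lra.
  have a5 : (0 < INR n * INR G)%R by apply: Rmult_lt_0_compat; lra.
  lra.
apply/ltP/INR_lt.
rewrite !INR_expn.
apply: ln_lt_inv.
- apply: pow_lt; rewrite INR_addn INR_muln INR2; lra.
- apply: pow_lt; rewrite INR2; lra.
rewrite !ln_pow ?INR2; try lra.
rewrite INR_addn INR_muln INR2; lra.
Qed.
Lemma floor_nat (x : R) : (0 <= x)%R -> exists s : nat, (INR s <= x < INR s + 1)%R.
Proof.
move=> Hx.
have [H1 H2] := archimed x.
have Hz : (0 < up x)%Z by apply: lt_0_IZR; lra.
exists (Z.to_nat (up x - 1)).
rewrite INR_IZR_INZ Znat.Z2Nat.id; last lia.
rewrite minus_IZR; lra.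
Qed.

Theorem proposition1 :
  exists (c : R) (n0 : nat), (0 < c)%R /\
    forall n G : nat, (n0 <= n)%N -> (1 <= G)%N ->
      (INR G <= Rpower 2 (INR n / 4))%R ->
      exists f : ('I_n -> bool) -> bool,
        (exists F : formula n, computes F f /\ (fgates F <= G)%N) /\
        (forall F : formula n, computes F f ->
           (c * INR n * INR G / ln (INR n) <= INR (fsize F))%R).
Proof.
exists (1 / 100)%R, 8; split; first lra.
move=> n G Hn HG HR.
case: n Hn HR => [//|n'] Hn HR.
set Gp := maxn 1 G.-1.
have Gp1 : 0 < Gp by rewrite /Gp; lia.
have GpG : Gp <= G by rewrite /Gp; lia.
set g := Gp.-1.
have Gpg : Gp = g.+1 by rewrite /g; lia.
set k := (trunc_log 2 Gp).+1.
have Hk1 : Gp < 2 ^ k by apply: trunc_log_ltn.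
have Hk2 : 2 ^ k <= 2 * G.
  rewrite /k expnS leq_mul2l /=; apply: leq_trans GpG; exact: trunc_logP.
have Hkb := k_bound Hk2 HG HR.
have n8 : (8 <= INR n'.+1)%R by have := le_INR _ _ (elimT leP Hn); rewrite /=; lra.
have Hkn : k.+1 <= n'.+1.
  apply/leP; apply: INR_le; rewrite S_INR; lra.
set m := n'.+1 - k.+1.
have Hkm : k.+1 + m = n'.+1 by rewrite /m subnKC.
have Hm : (INR n'.+1 / 2 <= INR m)%R.
  have := f_equal INR Hkm; rewrite INR_addn S_INR => E; lra.
have HGp : (INR G <= 2 * INR Gp)%R.
  rewrite -INR2 -INR_muln; apply: le_INR; apply/leP; rewrite /Gp; lia.
have Hg : g.+1 <= 2 ^ k by rewrite -Gpg; exact: ltnW.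
have Hx : (0 <= 1 / 100 * INR n'.+1 * INR G / ln (INR n'.+1))%R.
  have G1 : (1 <= INR G)%R by apply: (le_INR 1); apply/leP.
  have lnpos : (0 < ln (INR n'.+1))%R by rewrite -ln_1; apply: ln_increasing; lra.
  apply: Rmult_le_pos; last by apply: Rlt_le; apply: Rinv_0_lt_compat.
  apply: Rmult_le_pos; last lra.
  apply: Rmult_le_pos; lra.
have [s0 [Hs1 Hs2]] := floor_nat Hx.
have Hcard := real_key Hn HG Hm HGp Hs1.
have Hlt : #|{: (2 * s0).-tuple (Sym n'.+1)}| < #|{: Idx m g}|.
  rewrite card_Idx card_tuple card_sum card_prod card_bool card_ord -Gpg.
  exact: Hcard.
have [S HS] := pigeon (@Phi n'.+1 (2 * s0)) (fam_inj Hkm Hg) Hlt.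
exists (fam k S); split.
- exists (top n' k S); split; first by [].
  rewrite top_gates; move: Gpg; rewrite /Gp; case: (g) => [|g1] E; lia.
- move=> F HF.
  case: (leqP (fsize F) s0) => Hle.
  + exfalso.
    have Hle2 : 2 * fsize F <= 2 * s0 by rewrite leq_mul2l Hle orbT.
    have [w Hw] := @small_in_image n'.+1 (2 * s0) F Hle2.
    apply: (HS w) => x; by rewrite Hw HF.
  + have := le_INR _ _ (elimT leP Hle); rewrite S_INR; lra.
Qed.
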